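(* Let $R$ be a ring. The set $\mathrm{Den}_l(R,0)$, ordered by inclusion and with the product $S_1S_2:=\langle S_1,S_2\rangle$ (the multiplicative subsemigroup of $R$ generated by $S_1$ and $S_2$), is an abelian monoid with identity $\{1\}$ and a complete lattice, in which $S_1S_2=S_1\vee S_2$ for all $S_1,S_2\in\mathrm{Den}_l(R,0)$, and for any family $S_i\in \mathrm{Den}_l(R,0)$, $i\in I$, the meet is $\bigwedge_{i\in I}S_i=\bigvee\{S\in \mathrm{Den}_l(R,0)\mid S\subseteq \bigcap_{i\in I}S_i\}$.
   Context: Rings are associative with $1$. A multiplicatively closed subset $S$ of a ring $R$ is a subset with $1\in S$, $0\notin S$, closed under multiplication. It is a left Ore set if $Sr\cap Rs\neq\emptyset$ for all $r\in R$, $s\in S$; then $\mathrm{ass}(S):=\{r\in R\mid sr=0 \text{ for some } s\in S\}$. A left Ore set $S$ is a left denominator set if $rs=0$ with $r\in R$, $s\in S$ implies $tr=0$ for some $t\in S$. $\mathrm{Den}_l(R,0)$ is the set of left denominator sets $S$ with $\mathrm{ass}(S)=0$ (equivalently, left denominator sets consisting of regular elements). *)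

(* Defs.v *)
From HB Require Import structures.
From mathcomp Require Import all_boot all_algebra.
From mathcomp Require Import boolp classical_sets.
Set Implicit Arguments. Unset Strict Implicit. Unset Printing Implicit Defensive.
Import GRing.Theory.
Local Open Scope ring_scope.
Local Open Scope classical_set_scope.

Section Den.
Variable R : nzRingType.

Definition mult_closed (S : set R) : Prop :=
  S 1 /\ ~ S 0 /\ (forall a b, S a -> S b -> S (a * b)).

Definition left_Ore (S : set R) : Prop :=
  mult_closed S /\
  forall (r s : R), S s -> exists (s' r' : R), S s' /\ s' * r = r' * s.

Definition ass (S : set R) : set R := [set r | exists2 s, S s & s * r = 0].

Definition left_denominator (S : set R) : Prop :=
  left_Ore S /\
  forall (r s : R), S s -> r * s = 0 -> exists2 t, S t & t * r = 0.

Definition Den_l0 : set (set R) :=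
  [set S | left_denominator S /\ ass S = [set 0]].

Definition gen_subsemigroup (A : set R) : set R :=
  [set x | forall T : set R, A `<=` T ->
             (forall a b, T a -> T b -> T (a * b)) -> T x].

Definition den_prod (S1 S2 : set R) : set R := gen_subsemigroup (S1 `|` S2).

Definition Den_lub (F : set (set R)) (S : set R) : Prop :=
  Den_l0 S /\ (forall T, F T -> T `<=` S) /\
  (forall U, Den_l0 U -> (forall T, F T -> T `<=` U) -> S `<=` U).

Definition Den_glb (F : set (set R)) (S : set R) : Prop :=
  Den_l0 S /\ (forall T, F T -> S `<=` T) /\
  (forall U, Den_l0 U -> (forall T, F T -> U `<=` T) -> U `<=` S).

End Den.
Arguments Den_l0 : clear implicits.

(* Main.v *)
Require Import Defs.
From HB Require Import structures.
From mathcomp Require Import all_boot all_algebra.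
From mathcomp Require Import boolp classical_sets.
Local Open Scope ring_scope.
Local Open Scope classical_set_scope.
Import GRing.Theory.

Section Aux.
Variable R : nzRingType.

Definition regl (x : R) := (forall r, x * r = 0 -> r = 0) /\ (forall r, r * x = 0 -> r = 0).
Definition OreC (S : set R) := forall r s, S s -> exists s' r', S s' /\ s' * r = r' * s.

Lemma den_char (S : set R) : Den_l0 R S <->
  (S 1 /\ (forall a b, S a -> S b -> S (a * b)) /\ (forall s, S s -> regl s) /\ OreC S).
Proof.
split.
- move=> [[[[S1 [S0 Sc]] Ore] Den] Ass].
  have A0 : forall s r, S s -> s * r = 0 -> r = 0.
    move=> s r Ss e. have : ass S r by exists s.
    by rewrite Ass.
  split=> //; split=> //; split=> //.
  move=> s Ss; split; first by move=> r; exact: A0.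
  by move=> r e; have [t St tr] := Den r s Ss e; exact: (A0 t).
- move=> [S1 [Sc [Sr Ore]]].
  have S0 : ~ S 0.
    move=> S0; have [_ h] := Sr 0 S0. have := h 1 (mulr0 1).
    by move=> e; have := oner_neq0 R; rewrite e eqxx.
  split; first split; first split; first by split.
  + exact: Ore.
  + move=> r s Ss e; exists 1 => //; have [_ h] := Sr s Ss; by rewrite (h r e) mulr0.
  + apply/seteqP; split => x.
    * by case=> s Ss e; have [h _] := Sr s Ss; exact: h.
    * by move=> /= ->; exists 1 => //; rewrite mulr0.
Qed.

Lemma gen_sub (A : set R) : A `<=` gen_subsemigroup A.
Proof. by move=> x Ax T AT _; exact: AT. Qed.

Lemma gen_closed (A : set R) a b : gen_subsemigroup A a -> gen_subsemigroup A b ->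
  gen_subsemigroup A (a * b).
Proof. move=> ha hb T AT cT; apply: (cT a b); [exact: (ha T AT cT)|exact: (hb T AT cT)]. Qed.

Lemma gen_min (A T : set R) : A `<=` T -> (forall a b, T a -> T b -> T (a * b)) ->
  gen_subsemigroup A `<=` T.
Proof. by move=> AT cT x hx; exact: hx. Qed.

Lemma gen_den (A : set R) : A 1 -> (forall a, A a -> regl a) ->
  (forall r a, A a -> exists s' r', gen_subsemigroup A s' /\ s' * r = r' * a) ->
  Den_l0 R (gen_subsemigroup A).
Proof.
move=> A1 Ar AO; apply/den_char; split; first exact: gen_sub.
split; first by move=> a b; exact: gen_closed.
split.
  apply: gen_min => // a b [ha1 ha2] [hb1 hb2]; split.
  - by move=> r; rewrite -mulrA => /ha1 /hb1.
  - by move=> r; rewrite mulrA => /hb2 /ha2.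
move=> r s hs; move: s hs r.
apply: (@gen_min A ([set x | forall r, exists s' r', gen_subsemigroup A s' /\ s' * r = r' * x])).
  by move=> a Aa r; exact: AO.
move=> a b ha hb r.
have [s1 [r1 [g1 e1]]] := hb r.
have [s2 [r2 [g2 e2]]] := ha r1.
exists (s2 * s1), r2; split; first exact: gen_closed.
by rewrite -mulrA e1 mulrA e2 mulrA.
Qed.

Lemma den_in_gen (A S : set R) : Den_l0 R S -> S `<=` A ->
  forall r a, S a -> exists s' r', gen_subsemigroup A s' /\ s' * r = r' * a.
Proof.
move=> /den_char [_ [_ [_ Ore]]] SA r a Sa.
have [s' [r' [Ss e]]] := Ore r a Sa.
by exists s', r'; split => //; apply: gen_sub; exact: SA.
Qed.

Definition famA (F : set (set R)) : set R := [set x | x = 1 \/ exists2 T, F T & T x].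

Lemma lub_exists (F : set (set R)) : (forall T, F T -> Den_l0 R T) ->
  Den_lub F (gen_subsemigroup (famA F)).
Proof.
move=> FD; split.
  apply: gen_den; first by left.
  - move=> a [->|[T FT Ta]].
      by split=> r; rewrite ?mul1r ?mulr1.
    by have /den_char [_ [_ [h _]]] := FD T FT; exact: h.
  - move=> r a [->|[T FT Ta]].
      by exists 1, r; split; [apply: gen_sub; left|rewrite mul1r mulr1].
    apply: (@den_in_gen _ T) => //; first exact: FD.
    by move=> x Tx; right; exists T.
split.
  by move=> T FT x Tx; apply: gen_sub; right; exists T.
move=> U /den_char [U1 [Uc _]] hU; apply: gen_min => //.
by move=> x [->|[T FT Tx]] //; exact: hU T FT x Tx.
Qed.

Lemma gen_eq (A B : set R) : (forall x, A x <-> B x) -> gen_subsemigroup A = gen_subsemigroup B.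
Proof.
move=> h; apply/seteqP; split; apply: gen_min; try exact: gen_closed.
- by move=> x /h; exact: gen_sub.
- by move=> x /h; exact: gen_sub.
Qed.

Lemma gen_closed_set (S : set R) : (forall a b, S a -> S b -> S (a * b)) ->
  gen_subsemigroup S = S.
Proof.
move=> c; apply/seteqP; split; [exact: gen_min|exact: gen_sub].
Qed.

Lemma gen_assocl (A B : set R) : gen_subsemigroup (gen_subsemigroup A `|` B) = gen_subsemigroup (A `|` B).
Proof.
apply/seteqP; split; apply: gen_min; try exact: gen_closed.
- move=> x [hx|hx].
    by move: x hx; apply: gen_min; [move=> x Ax; apply: gen_sub; left|exact: gen_closed].
  by apply: gen_sub; right.
- by move=> x [hx|hx]; apply: gen_sub; [left; exact: gen_sub|right].
Qed.

Lemma gen_assocr (A B : set R) : gen_subsemigroup (A `|` gen_subsemigroup B) = gen_subsemigroup (A `|` B).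
Proof. by rewrite setUC gen_assocl setUC. Qed.

End Aux.
Arguments den_char {R}. Arguments gen_sub {R}. Arguments gen_closed {R}. Arguments gen_min {R}.
Arguments gen_den {R A}. Arguments den_in_gen {R}. Arguments famA {R}. Arguments lub_exists {R F}.
Arguments gen_eq {R}. Arguments gen_closed_set {R}. Arguments gen_assocl {R}. Arguments gen_assocr {R}.

Theorem corollary2p5 (R : nzRingType) :
  (* abelian monoid structure on Den_l(R,0) with product <S1,S2> and identity {1} *)
  Den_l0 R [set 1 : R] /\
  (forall S1 S2, Den_l0 R S1 -> Den_l0 R S2 -> Den_l0 R (den_prod S1 S2)) /\
  (forall S1 S2 S3, Den_l0 R S1 -> Den_l0 R S2 -> Den_l0 R S3 ->
     den_prod (den_prod S1 S2) S3 = den_prod S1 (den_prod S2 S3)) /\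
  (forall S1 S2, Den_l0 R S1 -> Den_l0 R S2 -> den_prod S1 S2 = den_prod S2 S1) /\
  (forall S, Den_l0 R S -> den_prod [set 1 : R] S = S /\ den_prod S [set 1 : R] = S) /\
  (* complete lattice w.r.t. inclusion: every family has a join and a meet *)
  (forall (I : Type) (Si : I -> set R), (forall i, Den_l0 R (Si i)) ->
     (exists S, Den_lub (range Si) S) /\ (exists S, Den_glb (range Si) S)) /\
  (* S1 S2 = S1 \/ S2 *)
  (forall S1 S2, Den_l0 R S1 -> Den_l0 R S2 ->
     Den_lub [set S1; S2] (den_prod S1 S2)) /\
  (* meet formula: /\_i S_i = \/ {S in Den_l(R,0) | S <= \bigcap_i S_i} *)
  (forall (I : Type) (Si : I -> set R), (forall i, Den_l0 R (Si i)) ->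
     forall S : set R,
       Den_lub [set T | Den_l0 R T /\ T `<=` \bigcap_(i in setT) Si i] S ->
       Den_glb (range Si) S).
Proof.
have meet : forall (I : Type) (Si : I -> set R), (forall i, Den_l0 R (Si i)) ->
     forall S : set R,
       Den_lub [set T | Den_l0 R T /\ T `<=` \bigcap_(i in setT) Si i] S ->
       Den_glb (range Si) S.
  move=> I Si hS S [DS [ub lub]]; split=> //; split.
  - move=> T [i _ <-]; apply: lub => // T' [_ hT'] x /hT'; exact.
  - move=> U DU hU; apply: ub; split=> // x Ux i _; apply: (hU (Si i)) => //; by exists i.
have one : Den_l0 R [set 1 : R].
  apply/den_char; split=> //; split; first by move=> a b -> ->; rewrite mulr1.
  split; first by move=> s ->; split=> r; rewrite ?mul1r ?mulr1.
  by move=> r s ->; exists 1, r; split => //; rewrite mul1r mulr1.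
have prodD : forall S1 S2, Den_l0 R S1 -> Den_l0 R S2 -> Den_lub [set S1; S2] (den_prod S1 S2).
  move=> S1 S2 D1 D2.
  have hF : forall T, [set S1; S2] T -> Den_l0 R T by move=> T [->|->].
  have := lub_exists hF.
  have -> : gen_subsemigroup (famA [set S1; S2]) = den_prod S1 S2.
    rewrite /den_prod; apply: gen_eq => x; split.
    - move=> [->|[T [->|->] Tx]]; [left|left|right] => //.
      by have /den_char [] := D1.
    - by move=> [hx|hx]; right; [exists S1 => //; left|exists S2 => //; right].
  by [].
split=> //; split; first by move=> S1 S2 D1 D2; have [] := prodD S1 S2 D1 D2.
split; first by move=> *; rewrite /den_prod gen_assocl gen_assocr setUA.
split; first by move=> *; rewrite /den_prod setUC.
split.
  move=> S /den_char [S1 [Sc _]]; rewrite /den_prod.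
  have e : [set 1 : R] `|` S = S.
    apply/seteqP; split=> x; first by case=> [->|].
    by move=> Sx; right.
  by rewrite (setUC S) e gen_closed_set.
split.
  move=> I Si hS; split.
    by exists (gen_subsemigroup (famA (range Si))); apply: lub_exists => T [i _ <-].
  set F := [set T | Den_l0 R T /\ T `<=` \bigcap_(i in setT) Si i].
  exists (gen_subsemigroup (famA F)); apply: meet => //.
  by apply: lub_exists => T [].
by split.
Qed.
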